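(* Let $L\subseteq\Sigma^*$ be a regular language whose syntactic monoid $\mathrm{Syn}(L)$ is a cyclic group. Then $\mathrm{ns}(L)=\mathrm{nsyn}(L)$.
   Context: $\mathrm{Syn}(L)$ is $\Sigma^*$ modulo $v\equiv_L w\iff\forall x,y\,(xvy\in L\Leftrightarrow xwy\in L)$. $\mathrm{ns}(L)$ is the least number of states of an nfa (several initial states allowed) accepting $L$. $\mathrm{nsyn}(L)$ is the least degree $|J(S)|$ (number of join-irreducibles of a finite semilattice $S$) of a boolean representation $\rho\colon\mathrm{Syn}(L)\to\mathbf{JSL}(S,S)$ (a monoid morphism into the join-preserving endomaps of $S$, multiplication $f\cdot g=g\circ f$) which extends the canonical representation $\kappa_L\colon[w]_L\mapsto(K\mapsto w^{-1}K)$ on $\mathrm{LQ}(L)$ (the semilattice of finite unions of left derivatives $u^{-1}L$), where extending means there is an injective join-preserving $f\colon\mathrm{LQ}(L)\to S$ with $f(w^{-1}K)=\rho([w]_L)(f(K))$. Equivalently (by the paper's main theorem), $\mathrm{nsyn}(L)$ is the least number of states of an nfa for $L$ all of whose states accept languages in the boolean algebra generated by the two-sided derivatives $u^{-1}Lv^{-1}$. *)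

(* Defs.v *)
From HB Require Import structures.
From mathcomp Require Import all_boot all_order.
Set Implicit Arguments. Unset Strict Implicit. Unset Printing Implicit Defensive.
Import Order.Theory.

Definition lang (Sigma : finType) := seq Sigma -> bool.

Definition lder (Sigma : finType) (u : seq Sigma) (K : lang Sigma) : lang Sigma :=
  fun w => K (u ++ w).

Fixpoint nfa_run (Sigma : finType) n (delta : 'I_n -> Sigma -> {set 'I_n})
    (X : {set 'I_n}) (w : seq Sigma) : {set 'I_n} :=
  match w with
  | [::] => X
  | a :: w' => nfa_run delta (\bigcup_(q in X) delta q a) w'
  end.

Definition nfa_accepts (Sigma : finType) n (delta : 'I_n -> Sigma -> {set 'I_n})
    (I F : {set 'I_n}) (w : seq Sigma) : bool :=
  [exists q in nfa_run delta I w, q \in F].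

Definition nfa_with_states (Sigma : finType) (L : lang Sigma) (n : nat) : Prop :=
  exists (delta : 'I_n -> Sigma -> {set 'I_n}) (I F : {set 'I_n}),
    forall w, nfa_accepts delta I F w = L w.

Definition regular (Sigma : finType) (L : lang Sigma) : Prop :=
  exists (n : nat) (delta : 'I_n -> Sigma -> 'I_n) (q0 : 'I_n) (F : {set 'I_n}),
    forall w, L w = (foldl (fun q a => delta q a) q0 w \in F).

Definition syn_equiv (Sigma : finType) (L : lang Sigma) (v w : seq Sigma) : Prop :=
  forall x y, L (x ++ v ++ y) = L (x ++ w ++ y).

Definition syn_is_group (Sigma : finType) (L : lang Sigma) : Prop :=
  forall u, exists v, syn_equiv L (u ++ v) [::] /\ syn_equiv L (v ++ u) [::].

Definition wpow (Sigma : finType) (g : seq Sigma) (k : nat) : seq Sigma :=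
  flatten (nseq k g).

(* Syn(L) is a cyclic group: a group generated by a single class [g]
   (Syn(L) being finite, its powers g^k, k in nat, exhaust the subgroup). *)
Definition syn_cyclic_group (Sigma : finType) (L : lang Sigma) : Prop :=
  syn_is_group L /\
  exists g : seq Sigma, forall u, exists k, syn_equiv L u (wpow g k).

Definition is_least (P : nat -> Prop) (n : nat) : Prop :=
  P n /\ forall m, P m -> n <= m.

(* LQ(L): finite unions of left derivatives (empty union = empty language) *)
Definition in_LQ (Sigma : finType) (L : lang Sigma) (K : lang Sigma) : Prop :=
  exists s : seq (seq Sigma), K =1 (fun w => has (fun u => L (u ++ w)) s).

Definition lunion (Sigma : finType) (K K' : lang Sigma) : lang Sigma :=
  fun w => K w || K' w.
Definition lempty (Sigma : finType) : lang Sigma := fun _ => false.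

Local Open Scope order_scope.

Definition join_pres d (S : finTBLatticeType d) (h : S -> S) : Prop :=
  h \bot = \bot /\ forall a b : S, h (a `|` b) = h a `|` h b.

Definition join_irr d (S : finTBLatticeType d) (j : S) : bool :=
  (j != \bot) && [forall a : S, forall b : S, (j == a `|` b) ==> ((j == a) || (j == b))].

Definition degree d (S : finTBLatticeType d) : nat := #|[set j : S | join_irr j]|.

(* A monoid morphism rho : Syn(L) -> JSL(S,S) (with f . g = g o f), given on
   representatives: it is constant on syntactic classes. *)
Definition syn_rep (Sigma : finType) (L : lang Sigma) d (S : finTBLatticeType d)
    (rho : seq Sigma -> S -> S) : Prop :=
  [/\ forall v w, syn_equiv L v w -> rho v =1 rho w,
      rho [::] =1 id,
      forall u v, rho (u ++ v) =1 rho v \o rho u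
    & forall w, join_pres (rho w)].

(* rho extends the canonical representation kappa_L on LQ(L) via an injective
   join-preserving f : LQ(L) -> S. *)
Definition extends_canonical (Sigma : finType) (L : lang Sigma) d
    (S : finTBLatticeType d) (rho : seq Sigma -> S -> S) (f : lang Sigma -> S) : Prop :=
  [/\ forall K K', in_LQ L K -> in_LQ L K' -> K =1 K' -> f K = f K',
      forall K K', in_LQ L K -> in_LQ L K' -> f K = f K' -> K =1 K',
      f (@lempty Sigma) = \bot,
      forall K K', in_LQ L K -> in_LQ L K' -> f (lunion K K') = f K `|` f K'
    & forall w K, in_LQ L K -> f (lder w K) = rho w (f K)].

Definition nsyn_with_degree (Sigma : finType) (L : lang Sigma) (n : nat) : Prop :=
  exists (d : Order.disp_t) (S : finTBLatticeType d)
         (rho : seq Sigma -> S -> S) (f : lang Sigma -> S),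
    [/\ syn_rep L rho, extends_canonical L rho f & degree S = n].

(* Main.v *)
From HB Require Import structures.
Require Import Defs.
From mathcomp Require Import all_boot all_order zify.
From Stdlib Require Import ClassicalEpsilon.
Set Implicit Arguments. Unset Strict Implicit. Unset Printing Implicit Defensive.

Definition pb (P : Prop) : bool := if excluded_middle_informative P then true else false.
Lemma pbP (P : Prop) : reflect P (pb P).
Proof. rewrite /pb; case: excluded_middle_informative => h; constructor => //. Qed.
Section Syn.
Variables (Sigma : finType) (L : lang Sigma).
Lemma syn_refl v : syn_equiv L v v. Proof. by []. Qed.
Lemma syn_sym v w : syn_equiv L v w -> syn_equiv L w v.
Proof. by move=> h x y; rewrite h. Qed.
Lemma syn_trans v w z : syn_equiv L v w -> syn_equiv L w z -> syn_equiv L v z.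
Proof. by move=> h1 h2 x y; rewrite h1 h2. Qed.
Lemma syn_cat v w v' w' : syn_equiv L v w -> syn_equiv L v' w' ->
  syn_equiv L (v ++ v') (w ++ w').
Proof.
move=> h1 h2 x y.
have -> : x ++ (v ++ v') ++ y = (x ++ v) ++ v' ++ y by rewrite !catA.
rewrite h2.
have -> : (x ++ v) ++ w' ++ y = x ++ v ++ (w' ++ y) by rewrite !catA.
by rewrite h1 !catA.
Qed.
Hypothesis Hgrp : syn_is_group L.
Lemma syn_cancel z v w : syn_equiv L (z ++ v) (z ++ w) -> syn_equiv L v w.
Proof.
move=> h; have [z' [_ hz]] := Hgrp z.
have e1 : syn_equiv L v (z' ++ (z ++ v)).
  by rewrite catA; apply: syn_sym; apply: (syn_cat hz (syn_refl v)).
have e2 : syn_equiv L (z' ++ (z ++ w)) w.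
  by rewrite catA; apply: (syn_cat hz (syn_refl w)).
exact: syn_trans (syn_trans e1 (syn_cat (syn_refl z') h)) e2.
Qed.
End Syn.

Lemma wpowD (Sigma : finType) (g : seq Sigma) x y : wpow g (x + y) = wpow g x ++ wpow g y.
Proof. by rewrite /wpow nseqD flatten_cat. Qed.

Section Run.
Variables (Sigma : finType) (n : nat) (delta : 'I_n -> Sigma -> {set 'I_n}).
Notation run := (nfa_run delta).
Lemma run_cat X u v : run X (u ++ v) = run (run X u) v.
Proof. by elim: u X => //= a u IH X. Qed.
Lemma run_mem w X q' : (q' \in run X w) = [exists q in X, q' \in run [set q] w].
Proof.
elim: w X => [|a w IH] X /=.
  apply/idP/existsP => [h|[q /andP [qX]]]; first by exists q'; rewrite h set11.
  by rewrite inE => /eqP ->.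
rewrite IH; apply/existsP/existsP => [[p /andP [/bigcupP [q qX pd] h]]|[q /andP [qX]]].
  exists q; rewrite qX /= IH; apply/existsP; exists p; rewrite h andbT.
  by apply/bigcupP; exists q; rewrite ?set11.
rewrite IH => /existsP [p /andP [/bigcupP [q0 ] ]]; rewrite inE => /eqP -> pd h.
by exists p; rewrite h andbT; apply/bigcupP; exists q.
Qed.
End Run.

Section Grp.
Variables (Sigma : finType) (L : lang Sigma) (n : nat)
  (delta : 'I_n -> Sigma -> {set 'I_n}) (I F : {set 'I_n}).
Hypothesis Hacc : forall w, nfa_accepts delta I F w = L w.
Hypothesis Hgrp : syn_is_group L.
Variable g : seq Sigma.
Hypothesis Hcyc : forall u, exists k, syn_equiv L u (wpow g k).
Notation run := (nfa_run delta).

Definition Mg t : {ffun 'I_n -> {set 'I_n}} := [ffun q => run [set q] (wpow g t)].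

Lemma ex_ab : exists ab : nat * nat, (ab.1 < ab.2) && (Mg ab.1 == Mg ab.2).
Proof.
pose N := #|{ffun 'I_n -> {set 'I_n}}|.
pose h (i : 'I_N.+1) := Mg i.
have : ~~ injectiveb h.
  apply/negP => /injectiveP inj; have := leq_card h inj; by rewrite card_ord ltnn.
case/injectivePn => i [j] ij e.
case: (ltngtP i j) => [lt|lt|eij]; last by move: ij; rewrite (val_inj eij) eqxx.
  by exists (nat_of_ord i, nat_of_ord j); rewrite /= lt; apply/eqP; exact: e.
by exists (nat_of_ord j, nat_of_ord i); rewrite /= lt; apply/eqP; exact: (esym e).
Qed.

Definition ab := xchoose ex_ab.
Definition a := ab.1.
Definition b := ab.2.
Lemma ab_lt : a < b. Proof. by case/andP: (xchooseP ex_ab). Qed.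
Lemma Mab : Mg a = Mg b. Proof. by case/andP: (xchooseP ex_ab) => _ /eqP. Qed.
Definition p := b - a.
Lemma p_gt0 : 0 < p. Proof. by rewrite /p subn_gt0 ab_lt. Qed.

Lemma run_ab X : run X (wpow g a) = run X (wpow g b).
Proof.
apply/setP => q'; rewrite !run_mem; apply: eq_existsb => q.
by have := congr1 (fun M : {ffun _ -> _} => M q) Mab; rewrite !ffunE => ->.
Qed.

Lemma run_per t X : a <= t -> run X (wpow g (t + p)) = run X (wpow g t).
Proof.
move=> hat.
have -> : t + p = b + (t - a) by have := ab_lt; rewrite /p; lia.
rewrite wpowD run_cat -run_ab -run_cat -wpowD; congr (run X (wpow g _)); lia.
Qed.

Lemma run_perc c t X : a <= t -> run X (wpow g (t + c * p)) = run X (wpow g t).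
Proof.
move=> hat; elim: c => [|c IH]; first by rewrite mul0n addn0.
have -> : t + c.+1 * p = (t + c * p) + p by rewrite mulSn; lia.
by rewrite run_per ?IH //; apply: leq_trans hat (leq_addr _ _).
Qed.

Lemma syn_gp : syn_equiv L (wpow g p) [::].
Proof.
have e : syn_equiv L (wpow g a) (wpow g b).
  by move=> x y; rewrite -!Hacc /nfa_accepts !run_cat run_ab.
apply: (syn_cancel Hgrp (z := wpow g a)); rewrite cats0 -wpowD.
have -> : a + p = b by have := ab_lt; rewrite /p; lia.
exact: syn_sym.
Qed.

Lemma syn_mulp c x : syn_equiv L (wpow g (c * p) ++ x) x.
Proof.
elim: c => [|c IH]; first by rewrite mul0n.
rewrite mulSn wpowD -catA.
apply: syn_trans IH; exact: (syn_cat syn_gp (syn_refl _ _)).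
Qed.

Lemma syn_mod t : syn_equiv L (wpow g t) (wpow g (t %% p)).
Proof. by rewrite {1}(divn_eq t p) wpowD; apply: syn_mulp. Qed.

Definition T0 := a * p.
Definition Pw (w : seq Sigma) (i : 'I_p) := pb (syn_equiv L (wpow g i) w).
Definition psi (w : seq Sigma) (X : {set 'I_n}) : {set 'I_n} :=
  \bigcup_(i | Pw w i) run X (wpow g (T0 + i)).

Lemma run_bigcup (P : pred 'I_p) (Y : 'I_p -> {set 'I_n}) v q'' :
  (q'' \in run (\bigcup_(i | P i) Y i) v) = [exists i, P i && (q'' \in run (Y i) v)].
Proof.
rewrite run_mem; apply/existsP/existsP => [[q /andP [/bigcupP [i Pi qY] h]]|[i /andP [Pi]]].
  exists i; rewrite Pi /= run_mem; apply/existsP; exists q; by rewrite qY.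
rewrite run_mem => /existsP [q /andP [qY h]]; exists q; rewrite h andbT.
by apply/bigcupP; exists i.
Qed.

Lemma psi_mem w X q' : (q' \in psi w X) = [exists q in X, q' \in psi w [set q]].
Proof.
apply/bigcupP/existsP => [[i Pi]|[q /andP [qX /bigcupP [i Pi h]]]].
  rewrite run_mem => /existsP [q /andP [qX h]]; exists q; rewrite qX /=.
  by apply/bigcupP; exists i.
exists i => //; rewrite run_mem; apply/existsP; exists q; by rewrite qX.
Qed.

Lemma ex_P w : exists i : 'I_p, Pw w i.
Proof.
have [j hj] := Hcyc w.
exists (Ordinal (ltn_pmod j p_gt0)); apply/pbP => /=.
exact: syn_sym (syn_trans hj (syn_mod j)).
Qed.

Lemma run2 X (i i' : nat) :
  run (run X (wpow g (T0 + i))) (wpow g (T0 + i')) = run X (wpow g (T0 + (i + i') %% p)).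
Proof.
rewrite -run_cat -wpowD.
have hp := p_gt0; have hd := divn_eq (i + i') p.
have -> : T0 + i + (T0 + i') = (T0 + (i + i') %% p) + (a + (i + i') %/ p) * p.
  rewrite /T0; lia.
rewrite run_perc // /T0; nia.
Qed.

Lemma Pcat w u (k : 'I_p) :
  Pw (w ++ u) k <-> exists i i' : 'I_p, [/\ Pw w i, Pw u i' & (i + i') %% p = k].
Proof.
split.
  move/pbP => hk; have [i /pbP hi] := ex_P w.
  pose i' := Ordinal (ltn_pmod (k + p - i) p_gt0).
  have e : (i + i') %% p = k.
    rewrite /= modnDmr.
    have -> : i + (k + p - i) = k + p by have := ltn_ord i; lia.
    by rewrite modnDr modn_small.
  exists i, i'; split => //; first exact/pbP.
  apply/pbP; apply: (syn_cancel Hgrp (z := wpow g i)); rewrite -wpowD.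
  apply: (syn_trans (syn_mod (i + i'))); rewrite e.
  apply: syn_trans hk _; exact: syn_cat (syn_sym hi) (syn_refl _ _).
case=> i [i' [/pbP hi /pbP hi' e]]; apply/pbP.
rewrite -e; apply: syn_trans (syn_sym (syn_mod _)) _.
rewrite wpowD; exact: syn_cat.
Qed.

Lemma psi_cat w u X : psi u (psi w X) = psi (w ++ u) X.
Proof.
apply/setP => q''; apply/idP/idP.
  case/bigcupP => i' Pi'; rewrite run_bigcup => /existsP [i /andP [Pi h]].
  rewrite run2 in h; apply/bigcupP.
  exists (Ordinal (ltn_pmod (i + i') p_gt0)) => //.
  by apply/Pcat; exists i, i'.
case/bigcupP => k /Pcat [i [i' [Pi Pi' e]]] h; apply/bigcupP; exists i' => //.
rewrite run_bigcup; apply/existsP; exists i; by rewrite Pi run2 e.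
Qed.

Definition Acc (X : {set 'I_n}) (u : seq Sigma) := [exists q in psi u X, q \in F].

Lemma Acc_decomp X u : Acc X u = [exists q in X, Acc [set q] u].
Proof.
apply/existsP/existsP => [[q' /andP [h qF]]|[q /andP [qX /existsP [q' /andP [h qF]]]]].
  move: h; rewrite psi_mem => /existsP [q /andP [qX h]].
  by exists q; rewrite qX; apply/existsP; exists q'; rewrite h.
by exists q'; rewrite qF andbT psi_mem; apply/existsP; exists q; rewrite qX.
Qed.

Lemma AccI x : Acc I x = L x.
Proof.
have Leq : forall v w, syn_equiv L v w -> L v = L w.
  by move=> v w h; have := h [::] [::]; rewrite /= !cats0.
apply/existsP/idP => [[q /andP [/bigcupP [i /pbP Pi h] qF]]|hx].
  have ei : (T0 + i) %% p = i %% p by rewrite /T0 modnMDl.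
  rewrite -(Leq _ _ Pi) (Leq _ _ (syn_mod i)) -ei -(Leq _ _ (syn_mod (T0 + i))).
  rewrite -Hacc; apply/existsP; exists q; by rewrite h.
have [i Pi] := ex_P x.
have : L (wpow g (T0 + i)).
  have ei : (T0 + i) %% p = i %% p by rewrite /T0 modnMDl.
  rewrite (Leq _ _ (syn_mod _)) ei -(Leq _ _ (syn_mod i)).
  by move/pbP: Pi => /Leq ->.
rewrite -Hacc => /existsP [q /andP [h qF]]; exists q; rewrite qF andbT.
by apply/bigcupP; exists i.
Qed.

Lemma psi_syn v w X : syn_equiv L v w -> psi v X = psi w X.
Proof.
move=> h; apply: eq_bigl => i; apply/pbP/pbP => hi.
  exact: syn_trans hi h.
exact: syn_trans hi (syn_sym h).
Qed.

End Grp.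

Import Order.Theory.
Section Clo.
Variables (Sigma : finType) (n : nat) (lq : 'I_n -> lang Sigma).

Definition Lang (X : {set 'I_n}) : lang Sigma := fun u => [exists q in X, lq q u].
Definition clo (X : {set 'I_n}) : {set 'I_n} := [set q | pb (forall u, lq q u -> Lang X u)].

Lemma Lang_sub (X Y : {set 'I_n}) : X \subset Y -> forall u, Lang X u -> Lang Y u.
Proof.
move=> /subsetP sXY u /existsP [q /andP [qX h]]; apply/existsP; exists q.
by rewrite sXY.
Qed.

Lemma subclo (X : {set 'I_n}) : X \subset clo X.
Proof.
apply/subsetP => q qX; rewrite inE; apply/pbP => u h.
by apply/existsP; exists q; rewrite qX.
Qed.

Lemma Lang_clo (X : {set 'I_n}) : Lang (clo X) =1 Lang X.
Proof.
move=> u; apply/idP/idP; last exact: Lang_sub (subclo X) u.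
by case/existsP => q /andP []; rewrite inE => /pbP h /h.
Qed.

Lemma clo_eq (X Y : {set 'I_n}) : Lang X =1 Lang Y -> clo X = clo Y.
Proof.
move=> e; apply/setP => q; rewrite !inE; apply/pbP/pbP => h u /h; by rewrite e.
Qed.

Lemma cloK (X : {set 'I_n}) : clo (clo X) = clo X.
Proof. exact/clo_eq/Lang_clo. Qed.

Lemma clo_min (X Z : {set 'I_n}) : clo Z = Z -> X \subset Z -> clo X \subset Z.
Proof.
move=> cZ sXZ; apply/subsetP => q; rewrite inE => /pbP h.
rewrite -cZ inE; apply/pbP => u /h; exact: Lang_sub.
Qed.

Definition CS := {X : {set 'I_n} | clo X == X}.
HB.instance Definition _ := Finite.on CS.

Lemma CS_closed (X : CS) : clo (val X) = val X.
Proof. exact/eqP/(valP X). Qed.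

Definition CSle (X Y : CS) := val X \subset val Y.
Lemma CSle_refl : reflexive CSle. Proof. by move=> X; exact: subxx. Qed.
Lemma CSle_anti : antisymmetric CSle.
Proof. by move=> X Y /andP [h1 h2]; apply: val_inj; apply/eqP; rewrite eqEsubset; apply/andP. Qed.
Lemma CSle_trans : transitive CSle. Proof. by move=> X Y Z; exact: subset_trans. Qed.

Fact cs_disp : Order.disp_t. Proof. exact: Order.Disp tt tt. Qed.

HB.instance Definition _ := Order.Le_isPOrder.Build cs_disp CS CSle_refl CSle_anti CSle_trans.

Definition mkCS (X : {set 'I_n}) : CS := exist (fun Z : {set 'I_n} => clo Z == Z) (clo X) (introT eqP (cloK X)).

Lemma CS_I_closed (X Y : CS) : clo (val X :&: val Y) == (val X :&: val Y).
Proof.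
rewrite eqEsubset subclo andbT subsetI.
by rewrite !clo_min ?CS_closed // ?subsetIl ?subsetIr.
Qed.
Definition CSmeet (X Y : CS) : CS := exist (fun Z : {set 'I_n} => clo Z == Z) _ (CS_I_closed X Y).
Definition CSjoin (X Y : CS) : CS := mkCS (val X :|: val Y).

Lemma CSmeetP (X Y Z : CS) : (X <= CSmeet Y Z)%O = (X <= Y)%O && (X <= Z)%O.
Proof. by rewrite /Order.le /= /CSle /= subsetI. Qed.
Lemma CSjoinP (X Y Z : CS) : (CSjoin X Y <= Z)%O = (X <= Z)%O && (Y <= Z)%O.
Proof.
rewrite /Order.le /= /CSle /= -subUset; apply/idP/idP.
  exact: subset_trans (subclo _).
exact: clo_min (CS_closed Z).
Qed.

HB.instance Definition _ := Order.POrder_MeetJoin_isLattice.Build cs_disp CS CSmeetP CSjoinP.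

Definition CSbot : CS := mkCS set0.
Lemma CSle0 (X : CS) : (CSbot <= X)%O.
Proof. by rewrite /Order.le /= /CSle /= clo_min ?CS_closed ?sub0set. Qed.
HB.instance Definition _ := Order.hasBottom.Build cs_disp CS CSle0.

Lemma setT_closed : clo setT == setT.
Proof. by rewrite eqEsubset subsetT subclo. Qed.
Definition CStop : CS := exist (fun Z : {set 'I_n} => clo Z == Z) _ setT_closed.
Lemma CSle1 (X : CS) : (X <= CStop)%O.
Proof. by rewrite /Order.le /= /CSle /= subsetT. Qed.
HB.instance Definition _ := Order.hasTop.Build cs_disp CS CSle1.


Lemma leCS (X Y : CS) : (X <= Y)%O = (val X \subset val Y).
Proof. by []. Qed.

Lemma CS_ext (X Y : CS) : Lang (val X) =1 Lang (val Y) -> X = Y.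
Proof. by move=> e; apply: val_inj; rewrite -(CS_closed X) -(CS_closed Y); apply: clo_eq. Qed.

Lemma Lang_mk X : Lang (val (mkCS X)) =1 Lang X.
Proof. exact: Lang_clo. Qed.

Lemma LangU X Y u : Lang (X :|: Y) u = Lang X u || Lang Y u.
Proof.
apply/existsP/orP => [[q /andP [] ]|[] /existsP [q /andP [qX h]]].
  by rewrite inE => /orP [] qX h; [left|right]; apply/existsP; exists q; rewrite qX.
  by exists q; rewrite inE qX.
by exists q; rewrite inE qX orbT.
Qed.

Lemma Lang0 u : Lang set0 u = false.
Proof. by apply/existsP => [[q]]; rewrite inE. Qed.

Lemma LangJ (X Y : CS) u : Lang (val (X `|` Y)%O) u = Lang (val X) u || Lang (val Y) u.
Proof. by rewrite (Lang_mk (val X :|: val Y)) LangU. Qed.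

Lemma LangB u : Lang (val (\bot : CS)%O) u = false.
Proof. by rewrite (Lang_mk set0) Lang0. Qed.

Lemma irr_join (j : CS) (r : seq 'I_n) (F : 'I_n -> CS) :
  join_irr j -> j = (\join_(x <- r) F x)%O -> exists2 x, x \in r & j = F x.
Proof.
case/andP => jn0 /forallP jirr; elim: r => [|x r IH].
  by rewrite big_nil => e; rewrite e eqxx in jn0.
rewrite big_cons => e.
have /forallP /(_ (\join_(x <- r) F x)%O) := jirr (F x).
rewrite e eqxx /= => /orP [/eqP h|/eqP h].
  by exists x; rewrite ?mem_head // e.
have [y yr ey] := IH (etrans e h).
exists y; first by rewrite in_cons yr orbT.
by rewrite -e.
Qed.

Lemma CS_joins (j : CS) : j = (\join_(q <- enum (val j)) mkCS [set q])%O.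
Proof.
apply/eqP; rewrite eq_le; apply/andP; split.
  rewrite leCS; apply/subsetP => q qj.
  have : (mkCS [set q] <= \join_(q <- enum (val j)) mkCS [set q])%O.
    by apply: (@joins_sup_seq _ _ _ _ predT (fun q => mkCS [set q])); rewrite ?mem_enum.
  rewrite leCS => /subsetP; apply; apply: (subsetP (subclo _)); exact: set11.
apply/joinsP_seq => q; rewrite mem_enum => qj _.
by rewrite leCS /= clo_min ?CS_closed // sub1set.
Qed.

Lemma degree_CS : degree CS <= n.
Proof.
have sub : [set j : CS | join_irr j] \subset (fun q => mkCS [set q]) @: [set: 'I_n].
  apply/subsetP => j; rewrite inE => ji.
  have [q _ ->] := irr_join ji (CS_joins j); exact: imset_f.
rewrite /degree (leq_trans (subset_leq_card sub)) //.
by rewrite (leq_trans (leq_imset_card _ _)) // cardsT card_ord.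
Qed.

Variable L : lang Sigma.
Variable act : seq Sigma -> {set 'I_n} -> {set 'I_n}.
Hypothesis Hact : forall w X u, Lang (act w X) u = Lang X (w ++ u).
Hypothesis Hsyn : forall v w X u, syn_equiv L v w -> Lang (act v X) u = Lang (act w X) u.
Hypothesis HLQ : forall K, in_LQ L K -> exists X, K =1 Lang X.

Definition rhoCS (w : seq Sigma) (X : CS) : CS := mkCS (act w (val X)).
Definition fCS (K : lang Sigma) : CS := mkCS [set q | pb (forall u, lq q u -> K u)].

Lemma Lang_rho w X u : Lang (val (rhoCS w X)) u = Lang (val X) (w ++ u).
Proof. by rewrite Lang_mk Hact. Qed.

Lemma Lang_f K : in_LQ L K -> Lang (val (fCS K)) =1 K.
Proof.
move=> /HLQ [X eK] u; rewrite Lang_mk; apply/existsP/idP.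
  by case=> q /andP []; rewrite inE => /pbP h /h.
rewrite eK => /existsP [q /andP [qX h]]; exists q; rewrite h andbT inE.
apply/pbP => v hv; rewrite eK; apply/existsP; exists q; by rewrite qX.
Qed.

Lemma in_LQ_union K K' : in_LQ L K -> in_LQ L K' -> in_LQ L (lunion K K').
Proof.
move=> [s es] [s' es']; exists (s ++ s') => w.
by rewrite /lunion es es' has_cat.
Qed.

Lemma in_LQ_lder w K : in_LQ L K -> in_LQ L (lder w K).
Proof.
move=> [s es]; exists [seq u ++ w | u <- s] => v.
by rewrite /lder es has_map; apply: eq_has => u /=; rewrite catA.
Qed.

Lemma in_LQ_empty : in_LQ L (@lempty Sigma).
Proof. by exists [::]. Qed.

Lemma rep_from_lq : exists2 e, e <= n & nsyn_with_degree L e.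
Proof.
exists (degree CS); first exact: degree_CS.
exists cs_disp, CS, rhoCS, fCS; split => //.
- split.
  + by move=> v w h X; apply: CS_ext => u; rewrite !Lang_rho -!Hact; apply: Hsyn.
  + by move=> X; apply: CS_ext => u; rewrite Lang_rho.
  + by move=> u v X; apply: CS_ext => x; rewrite Lang_rho /= Lang_clo Hact Lang_clo Hact catA.
  + move=> w; split.
      by apply: CS_ext => u; rewrite Lang_rho !LangB.
    by move=> a b; apply: CS_ext => u; rewrite Lang_rho !LangJ !Lang_rho.
- split.
  + move=> K K' hK hK' e; apply: CS_ext => u; rewrite !Lang_f //; exact: e.
  + by move=> K K' hK hK' e u; rewrite -(Lang_f hK) -(Lang_f hK') e.
  + by apply: CS_ext => u; rewrite LangB Lang_f //; exact: in_LQ_empty.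
  + move=> K K' hK hK'; apply: CS_ext => u.
    by rewrite LangJ !Lang_f //; exact: in_LQ_union.
  + move=> w K hK; apply: CS_ext => u.
    by rewrite Lang_rho !Lang_f //; exact: in_LQ_lder.
Qed.

End Clo.
Section Decomp.
Local Open Scope order_scope.
Variables (d : Order.disp_t) (S : finTBLatticeType d) (k : nat) (jv : 'I_k -> S).
Hypothesis jv_surj : forall j : S, join_irr j -> exists i, j = jv i.

Definition JB (s : S) := \join_(i | jv i <= s) jv i.

Lemma JB_mono (a s : S) : a <= s -> JB a <= JB s.
Proof.
move=> las; apply/joinsP => i hi; apply: joins_sup; exact: le_trans hi las.
Qed.

Lemma decomp_step (s : S) : (forall a, a < s -> a <= JB a) -> s <= JB s.
Proof.
move=> IH.
case: (eqVneq s \bot) => [->|sn0]; first exact: le0x.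
case ji: (join_irr s).
  have [i ->] := jv_surj ji; exact: joins_sup.
move/negbT: ji; rewrite /join_irr sn0 /= negb_forall => /existsP [a].
rewrite negb_forall => /existsP [b]; rewrite negb_imply negb_or => /andP [/eqP e /andP [na nb]].
have las : a < s by rewrite lt_neqAle eq_sym na e leUl.
have lbs : b < s by rewrite lt_neqAle eq_sym nb e leUr.
rewrite {1}e leUx; apply/andP; split.
  exact: le_trans (IH a las) (JB_mono (ltW las)).
exact: le_trans (IH b lbs) (JB_mono (ltW lbs)).
Qed.

Lemma decomp_le (s : S) : s <= JB s.
Proof.
move: {2}#|[set y | y < s]| (leqnn #|[set y | y < s]|) => N.
elim: N s => [|N IHN] s hN; apply: decomp_step => a las.
  by move: hN; rewrite leqn0 => /eqP/cards0_eq/setP/(_ a); rewrite !inE las.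
apply: IHN; rewrite -ltnS; apply: leq_trans hN.
apply: proper_card; apply/properP; split.
  by apply/subsetP => y; rewrite !inE => h; exact: lt_trans h las.
by exists a; rewrite !inE ?las ?ltxx.
Qed.

Lemma decomp (s : S) : JB s = s.
Proof.
apply/eqP; rewrite eq_le decomp_le andbT; exact/joinsP.
Qed.
End Decomp.

Section Dir1.
Local Open Scope order_scope.
Lemma join_bigcup d (S : finTBLatticeType d) k (X : {set 'I_k}) (A : 'I_k -> {set 'I_k})
  (g : 'I_k -> S) :
  \join_(i in \bigcup_(q in X) A q) g i = \join_(q in X) \join_(i in A q) g i.
Proof.
apply/eqP; rewrite eq_le; apply/andP; split.
  apply/joinsP => i /bigcupP [q qX iA].
  apply: (joins_min qX); exact: joins_sup.
apply/joinsP => q qX; apply/joinsP => i iA; apply: joins_sup.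
by apply/bigcupP; exists q.
Qed.

Lemma nsyn_to_nfa (Sigma : finType) (L : lang Sigma) e :
  nsyn_with_degree L e -> nfa_with_states L e.
Proof.
move=> [d [S [rho [f [[rcl rnil rcat rjp] [fwd finj fbot fjoin fder] <-]]]]].
set J := [set j : S | join_irr j].
pose jv (i : 'I_#|J|) : S := enum_val i.
have jv_surj : forall j, join_irr j -> exists i, j = jv i.
  move=> j ji; have jJ : j \in J by rewrite inE.
  by exists (enum_rank_in jJ j); rewrite /jv enum_rankK_in.
have LQL : in_LQ L L by exists [:: [::]] => w /=; rewrite orbF.
pose P x := pb (exists K, in_LQ L K /\ K [::] = false /\ x <= f K).
pose m := \join_(x : S | P x) x.
have fin : forall r : seq S, exists2 U, in_LQ L U /\ U [::] = false &
    \join_(x <- r | P x) x <= f U.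
  elim=> [|x r [U [hU U0] hr]].
    by exists (@lempty Sigma); [split => //; exists [::] | rewrite big_nil fbot].
  rewrite big_cons; case Px: (P x); last by exists U.
  move/pbP: Px => [K [hK [K0 xK]]].
  exists (lunion K U); first split.
  - by case: hK => s es; case: hU => s' es'; exists (s ++ s') => w; rewrite /lunion es es' has_cat.
  - by rewrite /lunion K0 U0.
  rewrite fjoin // leUx; apply/andP; split; first exact: le_trans xK (leUl _ _).
  exact: le_trans hr (leUr _ _).
have key : forall K, in_LQ L K -> (f K <= m) = ~~ K [::].
  move=> K hK; apply/idP/idP => [hKm|].
    have [U [hU U0] hmU] := fin (index_enum S).
    have e1 : f (lunion K U) = f U.
      by rewrite fjoin //; apply/eqP; rewrite eq_le leUr andbT leUx lexx (le_trans hKm hmU).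
    have hKU : in_LQ L (lunion K U).
      by case: hK => s es; case: hU => s' es'; exists (s ++ s') => w; rewrite /lunion es es' has_cat.
    have := finj _ _ hKU hU e1 [::]; rewrite /lunion U0 orbF => ->; done.
  move=> K0; apply: joins_sup; apply/pbP; exists K; split => //; split => //.
  exact: negbTE.
exists (fun i a => [set i' | jv i' <= rho [:: a] (jv i)]),
       [set i | jv i <= f L], [set i | ~~ (jv i <= m)].
have run : forall u (X : {set 'I_#|J|}) s, \join_(i in X) jv i = s ->
    \join_(i in nfa_run (fun i a => [set i' | jv i' <= rho [:: a] (jv i)]) X u) jv i = rho u s.
  elim=> [|a u IH] X s hX /=; first by rewrite rnil.
  rewrite (rcat [:: a] u) /=; apply: IH.
  rewrite join_bigcup -hX.
  rewrite (big_morph (rho [:: a]) (rjp [:: a]).2 (rjp [:: a]).1).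
  apply: eq_bigr => q _.
  rewrite -[RHS](decomp jv_surj); apply: eq_bigl => i; by rewrite inE.
move=> w; rewrite /nfa_accepts.
have hI : \join_(i in [set i | jv i <= f L]) jv i = f L.
  rewrite -[RHS](decomp jv_surj); apply: eq_bigl => i; by rewrite inE.
have := run w _ _ hI.
move=> hw.
have -> : L w = lder w L [::] by rewrite /lder cats0.
rewrite -[lder w L [::]]negbK -key; last by case: LQL => s es; exists [seq u ++ w | u <- s] => v; rewrite /lder es has_map; apply: eq_has => u /=; rewrite catA.
rewrite fder // -hw.
apply/idP/idP.
  case/existsP => q /andP [qX]; rewrite inE => nq; apply/negP => /joinsP hle.
  by move: (hle q qX); rewrite (negbTE nq).
move=> h; apply: contraTT h => /existsPn hq; rewrite negbK.
apply/joinsP => i iX; move: (hq i); rewrite iX inE /= negbK; done.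
Qed.

End Dir1.

Lemma grp_rep (Sigma : finType) (L : lang Sigma) (n : nat)
  (delta : 'I_n -> Sigma -> {set 'I_n}) (I F : {set 'I_n}) :
  (forall w, nfa_accepts delta I F w = L w) -> syn_cyclic_group L ->
  exists2 e, (e <= n)%N & nsyn_with_degree L e.
Proof.
move=> Hacc [Hgrp [g Hcyc]].
pose lq := fun q u => Acc L delta F g [set q] u.
have LangE : forall X u, Lang lq X u = Acc L delta F g X u.
  by move=> X u; rewrite /Lang (Acc_decomp L delta F g).
have AccU : forall X Y u, Acc L delta F g (X :|: Y) u = Acc L delta F g X u || Acc L delta F g Y u.
  move=> X Y u; rewrite -!LangE; exact: LangU.
have Acc0 : forall u, Acc L delta F g set0 u = false.
  move=> u; rewrite -!LangE; exact: Lang0.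
apply: (@rep_from_lq Sigma n lq L (psi L delta g)).
- by move=> w X u; rewrite !LangE /Acc (psi_cat Hacc Hgrp Hcyc).
- by move=> v w X u h; rewrite (psi_syn delta g _ h).
- move=> K [s es].
  exists (\bigcup_(u <- s) psi L delta g u I) => w; rewrite es LangE.
  elim: s {es} => [|u s IH] /=; first by rewrite big_nil Acc0.
  rewrite big_cons AccU IH; congr (_ || _).
  by rewrite /Acc (psi_cat Hacc Hgrp Hcyc) -/(Acc L delta F g I (u ++ w)) (AccI Hacc Hgrp Hcyc).
Qed.

Lemma dfa_nfa (Sigma : finType) (L : lang Sigma) : regular L -> exists n, nfa_with_states L n.
Proof.
case=> n [delta [q0 [F hL]]]; exists n.
exists (fun q a => [set delta q a]), [set q0], F => w.
have run : forall q, nfa_run (fun q a => [set delta q a]) [set q] w = [set foldl (fun q a => delta q a) q w].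
  elim: w => [|a w IH] q //=; by rewrite big_set1 IH.
rewrite hL /nfa_accepts run; apply/existsP/idP => [[x /andP [/set1P -> //]]|h].
by exists (foldl (fun q a => delta q a) q0 w); rewrite set11.
Qed.

Theorem theorem5p2 (Sigma : finType) (L : lang Sigma) :
  regular L -> syn_cyclic_group L ->
  exists n, is_least (nfa_with_states L) n /\ is_least (nsyn_with_degree L) n.
Proof.
move=> hreg hcyc.
have ex : exists n, pb (nfa_with_states L n).
  by have [n h] := dfa_nfa hreg; exists n; apply/pbP.
case: (ex_minnP ex) => m /pbP hm hmin.
have [delta [I [F hacc]]] := hm.
have [e hem he] := grp_rep hacc hcyc.
have hme : (m <= e)%N by apply: hmin; apply/pbP; exact: nsyn_to_nfa he.
have eme : e = m by apply/eqP; rewrite eqn_leq hem hme.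
exists m; split; split => //.
- by move=> k hk; apply: hmin; apply/pbP.
- by rewrite -eme.
- by move=> k hk; apply: hmin; apply/pbP; exact: nsyn_to_nfa hk.
Qed.
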